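(* Every $G$-invariant proper ideal of $\mathcal{A}(D)$ is contained in $\mathcal{V}(D)$.
   Context: Let $G$ be a group generated by a conjugacy class $D$ of involutions such that for all $d,e\in D$ the order of $de$ is $1$, $2$ or $3$. Lines of the Fischer space on $D$ are triples $\{d,e,d^e\}$ with $d,e\in D$ non-commuting. $\mathcal{A}(D)$ is the $\mathbb{F}_2$-vector space with basis $D$ (finite subsets of $D$ under symmetric difference), with bilinear product determined by $d*e=d+e+f$ if $\{d,e,f\}$ is a line and $d*e=0$ otherwise. $G$ acts on $\mathcal{A}(D)$ by linearly extending conjugation on $D$. The bilinear form $\langle\cdot,\cdot\rangle$ is determined by $\langle d,e\rangle=1$ if $d,e$ do not commute and $0$ otherwise; $\mathcal{V}(D)$ is its radical. *)

(* Defs.v *)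
From HB Require Import structures.
From mathcomp Require Import all_boot.
From mathcomp Require Import finmap.

Set Implicit Arguments.
Unset Strict Implicit.
Unset Printing Implicit Defensive.

Local Open Scope fset_scope.
Local Open Scope group_scope.

(* A (possibly infinite) group is a [groupType] from mathcomp/boot/monoid.v;
   conjugation x ^ y := y^-1 * x * y.                                       *)

Section Fischer.
Variable gT : groupType.

Definition is_conj_class (D : {pred gT}) : Prop :=
  exists x : gT, forall y : gT, y \in D <-> exists g : gT, y = x ^ g.

(* gT is generated by D: every element is a finite product of elements of D
   (D consists of involutions, so inverses are not needed, but we allow them
   anyway by closing under products of elements of D and their inverses). *)
Definition generated_by (D : {pred gT}) : Prop :=
  forall g : gT, exists s : seq (bool * gT),
    (forall p, p \in s -> p.2 \in D) /\
    g = \prod_(p <- s) (if p.1 then p.2 else p.2^-1).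

Definition involutions (D : {pred gT}) : Prop :=
  forall d, d \in D -> d * d = 1 /\ d != 1.

Definition order_le3 (D : {pred gT}) : Prop :=
  forall d e, d \in D -> e \in D ->
    exists n : nat, [/\ (1 <= n)%N, (n <= 3)%N & (d * e) ^+ n = 1].

(* ---- The algebra A(D) over F_2: finite subsets of D, sum = symmetric
   difference. *)
Definition inA (D : {pred gT}) (x : {fset gT}) : Prop :=
  forall d, d \in x -> d \in D.

Definition fsymd (x y : {fset gT}) : {fset gT} := (x `\` y) `|` (y `\` x).

(* Product of basis elements: d*e = d+e+f if {d,e,f} is a line
   (f = d^e, d and e non-commuting), and 0 otherwise. *)
Definition bprod (d e : gT) : {fset gT} :=
  if d * e == e * d then fset0 else [fset d; e; d ^ e].

Definition amul (x y : {fset gT}) : {fset gT} :=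
  \big[fsymd/fset0]_(d <- x) \big[fsymd/fset0]_(e <- y) bprod d e.

(* Bilinear form: <d,e> = 1 iff d and e do not commute (true = 1 in F_2). *)
Definition bform (x y : {fset gT}) : bool :=
  \big[addb/false]_(d <- x) \big[addb/false]_(e <- y) (d * e != e * d).

Definition inV (D : {pred gT}) (x : {fset gT}) : Prop :=
  inA D x /\ forall y, inA D y -> bform x y = false.

Definition gact (g : gT) (x : {fset gT}) : {fset gT} := [fset d ^ g | d in x].

Definition is_ideal (D : {pred gT}) (I : {fset gT} -> Prop) : Prop :=
  [/\ forall x, I x -> inA D x,
      I fset0,
      forall x y, I x -> I y -> I (fsymd x y)
    & forall a x, inA D a -> I x -> I (amul a x) /\ I (amul x a)].

Definition proper_ideal (D : {pred gT}) (I : {fset gT} -> Prop) : Prop :=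
  is_ideal D I /\ exists a, inA D a /\ ~ I a.

Definition G_invariant (I : {fset gT} -> Prop) : Prop :=
  forall g x, I x -> I (gact g x).

End Fischer.

(* Main.v *)
Require Import Defs.
From HB Require Import structures.
From mathcomp Require Import all_boot.
From mathcomp Require Import finmap.
Local Open Scope fset_scope.
Local Open Scope group_scope.

Section S.
Variable gT : groupType.
Implicit Types x y : {fset gT}.

Lemma in_fsymd (z : gT) x y : (z \in fsymd x y) = (z \in x) (+) (z \in y).
Proof. by rewrite /fsymd in_fsetU !in_fsetD; case: (z \in x); case: (z \in y). Qed.

Lemma in_bigfsymd (I : Type) (s : seq I) (F : I -> {fset gT}) z :
  (z \in \big[@fsymd gT/fset0]_(i <- s) F i) = \big[addb/false]_(i <- s) (z \in F i).
Proof.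
elim: s => [|i s IH]; first by rewrite !big_nil in_fset0.
by rewrite !big_cons in_fsymd IH.
Qed.

Lemma mem_sum_uniq (s : seq gT) z : uniq s ->
  (z \in s) = \big[addb/false]_(e <- s) (z == e).
Proof.
elim: s => [|e s IH] /=; first by rewrite big_nil.
case/andP => es us; rewrite big_cons in_cons -IH //.
by case: eqP => // ->; rewrite (negbTE es).
Qed.

Lemma in_gact (d z : gT) x : d * d = 1 -> (z \in gact d x) = (z ^ d \in x).
Proof.
move=> dd; apply/imfsetP/idP => /=.
  by case=> e ex ->; rewrite -conjgM dd conjg1.
by move=> h; exists (z ^ d) => //; rewrite -conjgM dd conjg1.
Qed.

Lemma invd (d : gT) : d * d = 1 -> d^-1 = d.
Proof. by move/mulg1_eq. Qed.

Lemma eq_conj (d z e : gT) : d * d = 1 -> (z ^ d == e) = (z == e ^ d).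
Proof.
move=> dd; apply/eqP/eqP => [<-|->]; by rewrite -conjgM dd conjg1.
Qed.

Lemma line_facts (D : {pred gT}) d e : involutions D -> order_le3 D ->
  d \in D -> e \in D -> d * e != e * d ->
  [/\ d ^ e = e ^ d, d != e, d ^ e != d & d ^ e != e].
Proof.
move=> hinv hord dD eD nc.
have [dd _] := hinv d dD; have [ee _] := hinv e eD.
have di := invd _ dd; have ei := invd _ ee.
have [n [n1 n3 hn]] := hord d e dD eD.
have de : d != e by apply: contra nc => /eqP ->.
have ede : d ^ e = e * d * e by rewrite conjgE ei mulgA.
have ded : e ^ d = d * e * d by rewrite conjgE di mulgA.
split => //.
- case: n n1 n3 hn => [|[|[|[|n]]]] // _ _.
  + rewrite expg1 => h; move: nc; by rewrite -(mulg1_eq h) di eqxx.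
  + rewrite expgS expg1 => h; move: nc.
    have := mulg1_eq h; rewrite invgM di ei => ->; by rewrite eqxx.
  + rewrite expgS expgS expg1 => h.
    rewrite ede ded.
    have h' : (d * e * d) * (e * d * e) = 1 by rewrite -h !mulgA.
    by rewrite -(mulg1_eq h') !invgM di ei mulgA.
- apply: contra nc => /eqP h; apply/eqP.
  by rewrite conjgC h.
- apply: contra de => /eqP h.
  rewrite conjgE ei in h.
  have h2 : d * e = 1 by apply: (mulgI e); rewrite mulg1.
  by rewrite -(mulg1_eq h2) di.
Qed.

Lemma per_e (D : {pred gT}) d e z : involutions D -> order_le3 D ->
  d \in D -> e \in D ->
  (z \in bprod d e) (+) (z == e) (+) (z ^ d == e) = (d * e != e * d) && (z == d).
Proof.
move=> hinv hord dD eD.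
have [dd _] := hinv d dD.
rewrite eq_conj // /bprod.
case: eqP => [c|/eqP nc] /=.
  have -> : e ^ d = e by rewrite conjgE (invd _ dd) -c mulgA dd mul1g.
  by rewrite ?in_fset0 /=; case: (z == e).
have [ede ne n1 n2] := @line_facts D d e hinv hord dD eD nc.
rewrite -ede !inE.
case: (z =P d) => [->|_]; first by rewrite (negbTE ne) eq_sym (negbTE n1).
case: (z =P e) => [->|_]; first by rewrite eq_sym (negbTE n2).
by case: (z =P d ^ e).
Qed.

Lemma mem_fset_sum (x : {fset gT}) z :
  (z \in x) = \big[addb/false]_(e <- x) (z == e).
Proof. by rewrite -mem_sum_uniq ?fset_uniq. Qed.

Lemma key (D : {pred gT}) d x : involutions D -> order_le3 D ->
  d \in D -> inA D x ->
  fsymd (fsymd (amul [fset d] x) x) (gact d x) =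
  if bform x [fset d] then [fset d] else fset0.
Proof.
move=> hinv hord dD xD.
have [dd _] := hinv d dD.
apply/fsetP => z.
rewrite !in_fsymd in_gact // /amul in_bigfsymd big_seq_fset1 in_bigfsymd.
rewrite !mem_fset_sum -!big_split /=.
have -> : bform x [fset d] = \big[addb/false]_(e <- x) (e * d != d * e).
  by rewrite /bform; apply: eq_bigr => e _; rewrite big_seq_fset1.
under eq_big_seq => e ex.
  rewrite (@per_e D) //; last exact: xD.
  over.
case: ifP => hb.
  rewrite -mem_fset_sum in_fset1; case: (z =P d) => [_|_].
    by rewrite -[RHS]hb; apply: eq_bigr => e _; rewrite andbT eq_sym.
  by rewrite big1 // => e _; rewrite andbF.
rewrite -mem_fset_sum in_fset0; case: (z =P d) => [_|_].
  by rewrite -[RHS]hb; apply: eq_bigr => e _; rewrite andbT eq_sym.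
by rewrite big1 // => e _; rewrite andbF.
Qed.

Lemma gact1 (k e : gT) : gact k [fset e] = [fset e ^ k].
Proof.
apply/fsetP => z; rewrite in_fset1; apply/imfsetP/eqP => /=.
  by case=> f; rewrite in_fset1 => /eqP -> ->.
by move=> ->; exists e; rewrite ?in_fset1.
Qed.

Lemma fset_as_sum (a : {fset gT}) : a = \big[@fsymd gT/fset0]_(e <- a) [fset e].
Proof.
by apply/fsetP => z; rewrite in_bigfsymd mem_fset_sum; apply: eq_bigr => e _; rewrite in_fset1.
Qed.
End S.

Theorem proposition2p4 (gT : groupType) (D : {pred gT})
  (hconj : is_conj_class D) (hgen : generated_by D)
  (hinv : involutions D) (hord : order_le3 D)
  (I : {fset gT} -> Prop) :
  proper_ideal D I -> G_invariant I -> forall x, I x -> inV D x.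
Proof.
move=> [[Isub I0 Iadd Imul] [a [aD nIa]]] Ginv x Ix.
split; first exact: Isub.
move=> y yD; apply/negP => hb.
have [e ey he] : exists2 e, e \in y & bform x [fset e].
  apply/hasP; move: hb; apply: contraLR => /hasPn h.
  rewrite /bform exchange_big /= big1_seq // => e /andP [_ ey].
  have := h e ey; rewrite /bform; under eq_bigr do rewrite big_seq_fset1.
  by move/negbTE.
have eD : e \in D by apply: yD.
have Ie : I [fset e].
  have eA : inA D [fset e] by move=> f; rewrite in_fset1 => /eqP ->.
  have := @key _ D e x hinv hord eD (Isub _ Ix); rewrite he => <-.
  apply: (Iadd); last exact: Ginv.
  apply: (Iadd) => //; exact: (Imul _ _ eA Ix).1.
have Is : forall f, f \in D -> I [fset f].
  move=> f fD; have [x0 hx0] := hconj.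
  have [g eg] := (hx0 e).1 eD; have [h fh] := (hx0 f).1 fD.
  have := Ginv (g^-1 * h) _ Ie; rewrite gact1 eg -conjgM mulgA mulgV mul1g -fh.
  done.
apply: nIa; rewrite (@fset_as_sum _ a).
have aD' : forall f, f \in enum_fset a -> f \in D by exact: aD.
elim: (enum_fset a) aD' => [|f s IH] hs; first by rewrite big_nil.
rewrite big_cons; apply: (Iadd).
  by apply: (Is); apply: hs; rewrite inE eqxx.
by apply: IH => g gs; apply: hs; rewrite inE gs orbT.
Qed.
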